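(* For $n\ge2$ and $\theta=(\theta_{ij})_{1\le i,j\le n-1}\in\mathbb{R}^{(n-1)^2}$ let $$\Phi(\theta)=\binom n2^{-2}\Big(\sum_{\substack{i>\ell\\ j>k}}\cos(\theta_{ij}-\theta_{ik}-\theta_{\ell j}+\theta_{\ell k})+\sum_{\substack{i>\ell\\ j}}\cos(\theta_{ij}-\theta_{\ell j})+\sum_{\substack{j>k\\ i}}\cos(\theta_{ij}-\theta_{ik})+\sum_{i,j}\cos\theta_{ij}\Big),$$ where all indices $i,\ell,j,k$ range over $\{1,\dots,n-1\}$. There exist $n_0,q_0$ such that for all integers $n\ge n_0$, $q\ge q_0$ and every $\theta\in[-\pi,\pi]^{(n-1)^2}$ with $\|\theta\|_\infty>1/\sqrt q$, $$\Phi(\theta)\le1-\frac1{400n^2q}.$$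
   Context: $\Phi$ is the characteristic function of one increment of the $n\times n$ Diaconis–Gangolli walk, restricted to the first $n-1$ rows and $n-1$ columns. *)

(* Defs.v *)
From mathcomp Require Import all_boot all_order all_algebra.
From mathcomp Require Import all_classical all_reals all_analysis.
Set Implicit Arguments. Unset Strict Implicit. Unset Printing Implicit Defensive.
Import Order.TTheory GRing.Theory Num.Theory.
Local Open Scope ring_scope.

(* Characteristic function Phi of one increment of the n x n Diaconis-Gangolli
   walk restricted to the first n-1 rows/columns.  theta : 'M[R]_(n.-1);
   index i : 'I_(n.-1) stands for paper index i+1 (order preserved). *)
Definition Phi (R : realType) (n : nat) (theta : 'M[R]_(n.-1)) : R :=
  ('C(n, 2)%:R ^+ 2)^-1 *
  ( \sum_(i < n.-1) \sum_(l < n.-1 | (l < i)%N) \sum_(j < n.-1) \sum_(k < n.-1 | (k < j)%N)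
        cos (theta i j - theta i k - theta l j + theta l k)
  + \sum_(i < n.-1) \sum_(l < n.-1 | (l < i)%N) \sum_(j < n.-1)
        cos (theta i j - theta l j)
  + \sum_(j < n.-1) \sum_(k < n.-1 | (k < j)%N) \sum_(i < n.-1)
        cos (theta i j - theta i k)
  + \sum_(i < n.-1) \sum_(j < n.-1) cos (theta i j)).

(* Main.v *)
Require Import Defs.
From mathcomp Require Import all_boot all_order all_algebra.
From mathcomp Require Import all_classical all_reals all_analysis.
From mathcomp Require Import ring lra.
Import Order.TTheory GRing.Theory Num.Theory.
Set Implicit Arguments. Unset Strict Implicit. Unset Printing Implicit Defensive.
Local Open Scope ring_scope.

Definition gg (R : realType) (x : R) := 1 - cos x.

Lemma gg_ge0 (R : realType) (x : R) : 0 <= gg x.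
Proof. by rewrite /gg subr_ge0 cos_le1. Qed.

Lemma ggN (R : realType) (x : R) : gg (- x) = gg x.
Proof. by rewrite /gg cosN. Qed.

Lemma ggD (R : realType) (x y : R) : gg (x + y) <= 2 * gg x + 2 * gg y.
Proof.
rewrite /gg cosD.
have h1 := cos2Dsin2 x; have h2 := cos2Dsin2 y.
have c1 := cos_le1 x; have c2 := cos_le1 y.
have e1 : 0 <= (sin x - sin y) ^+ 2 by apply: sqr_ge0.
have e2 : 0 <= (1 - cos x) * (1 - cos y) by apply: mulr_ge0; lra.
have e3 : 0 <= (1 - cos x) ^+ 2 by apply: sqr_ge0.
have e4 : 0 <= (1 - cos y) ^+ 2 by apply: sqr_ge0.
have E : 2 * (1 - cos x) + 2 * (1 - cos y) - (1 - (cos x * cos y - sin x * sin y))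
  = (1 - cos x) * (1 - cos y) + ((1 - cos x) ^+ 2 + (1 - cos y) ^+ 2) / 2
    + (sin x - sin y) ^+ 2 / 2 + (1 - (cos x ^+ 2 + sin x ^+ 2)) / 2 + (1 - (cos y ^+ 2 + sin y ^+ 2)) / 2.
  by rewrite /GRing.exp /=; field.
rewrite h1 h2 !subrr !mul0r !addr0 in E.
rewrite -subr_ge0 E.
have : 0 <= (1 - cos x) * (1 - cos y) + ((1 - cos x) ^+ 2 + (1 - cos y) ^+ 2) / 2 + (sin x - sin y) ^+ 2 / 2 by lra.
done.
Qed.

Lemma gg4 (R : realType) (a b c d : R) :
  gg (a + b + c + d) <= 4 * (gg a + gg b + gg c + gg d).
Proof.
have := ggD (a + b) (c + d); have := ggD a b; have := ggD c d.
rewrite (addrA (a + b) c d); lra.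
Qed.

Lemma gg_big (R : realType) (t : R) : pi / 2 <= t <= pi -> 1 <= gg t.
Proof.
move=> /andP[h1 h2].
have -> : t = (t - pi / 2) + pi / 2 by rewrite subrK.
rewrite /gg cosDpihalf.
have : 0 <= sin (t - pi / 2).
  by apply: sin_ge0_pi; have := @pi_gt0 R => ?; apply/andP; split; lra.
lra.
Qed.

Lemma gg_low_k (R : realType) (k : nat) (t : R) :
  0 <= t <= pi -> pi <= 2 ^+ k.+1 * t -> t ^+ 2 <= pi ^+ 2 * gg t.
Proof.
have pi0 := @pi_gt0 R.
have base : forall t : R, 0 <= t <= pi -> pi <= 2 * t -> t ^+ 2 <= pi ^+ 2 * gg t.
  move=> s /andP[s0 s1] hs.
  have := @gg_big R s; rewrite (_ : pi / 2 <= s) ?s1 //; last lra.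
  move=> /(_ isT) hg.
  have : s ^+ 2 <= pi ^+ 2 by rewrite ler_sqr ?nnegrE //; lra.
  nra.
elim: k t => [|k IH] t ht hk.
  by apply: base; rewrite // -(expr1 2).
case: (lerP pi (2 * t)) => h2; first by apply: base.
move/andP: ht => [t0 t1].
have hk' : pi <= 2 ^+ k.+1 * (2 * t) by rewrite mulrA -exprSr.
have H : 0 <= 2 * t <= pi by apply/andP; split; lra.
have H2 := IH (2 * t) H hk'.
have H3 := ggD t t.
rewrite (_ : t + t = 2 * t) in H3; last by ring.
have : (2 * t) ^+ 2 = 4 * t ^+ 2 by rewrite exprMn; congr (_ * _); rewrite expr2 -natrM.
nra.
Qed.

Lemma gg_low (R : realType) (t : R) : `|t| <= pi -> t ^+ 2 <= pi ^+ 2 * gg t.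
Proof.
move=> ht.
have -> : gg t = gg `|t| by rewrite /gg cos_norm.
rewrite -(real_normK (num_real t)).
have [t0|tp] := eqVneq `|t| 0.
  by rewrite t0 expr0n /= mulr_ge0 ?gg_ge0 ?sqr_ge0.
have tpos : 0 < `|t| by rewrite lt_def tp normr_ge0.
have pi0 := @pi_gt0 R.
set k := Num.Def.archi_bound (pi / `|t|).
have hk : pi / `|t| < k%:R by apply: archi_boundP; rewrite divr_ge0 // ltW.
have hk2 : (k%:R : R) <= 2 ^+ k.+1.
  rewrite -natrX ler_nat; apply: ltnW; apply: (@leq_trans (2 ^ k)).
    exact: ltn_expl.
  by rewrite leq_exp2l.
apply: (gg_low_k (k := k)).
  by rewrite normr_ge0 ht.
rewrite ltr_pdivrMr // in hk.
apply: (le_trans (ltW hk)); rewrite ler_pM2r //.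
Qed.
Lemma sym2 (R : realType) m (h : 'I_m -> 'I_m -> R) :
  (forall i, h i i = 0) -> (forall i l, h i l = h l i) ->
  \sum_(i < m) \sum_(l < m) h i l = 2 * \sum_(i < m) \sum_(l < m | (l < i)%N) h i l.
Proof.
move=> h0 hs.
have E : forall i l : 'I_m, h i l = (if (l < i)%N then h i l else 0) + (if (i < l)%N then h i l else 0).
  move=> i l; case: (ltngtP l i) => [lt|gt|/val_inj eq]; rewrite ?addr0 ?add0r //.
  by rewrite eq h0.
under eq_bigr => i _ do under eq_bigr => l _ do rewrite E.
under eq_bigr => i _ do rewrite big_split /=.
rewrite big_split /=.
have -> : \sum_(i < m) \sum_(l < m) (if (i < l)%N then h i l else 0) =
          \sum_(i < m) \sum_(l < m) (if (l < i)%N then h i l else 0).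
  rewrite exchange_big /=; apply: eq_bigr => i _; apply: eq_bigr => l _.
  by rewrite hs.
rewrite -!(eq_bigr _ (fun i _ => big_mkcond _ _)) /=.
lra.
Qed.

Lemma single_le (R : realType) (I : finType) (F : I -> R) (i0 : I) :
  (forall i, 0 <= F i) -> F i0 <= \sum_i F i.
Proof.
move=> h; rewrite (bigD1 i0) //= lerDl; apply: sumr_ge0 => i _; exact: h.
Qed.

Lemma cnt2 (R : realType) m :
  \sum_(i < m) \sum_(l < m | (l < i)%N) (1 : R) = 'C(m, 2)%:R.
Proof.
have E : forall i : 'I_m, \sum_(l < m | (l < i)%N) (1 : R) = (i : nat)%:R.
  move=> i; rewrite -(big_ord_widen m (fun _ => (1:R)) (ltnW (ltn_ord i))).
  by rewrite sumr_const card_ord.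
under eq_bigr => i _ do rewrite E.
rewrite -natr_sum -bin2_sum big_mkord //.
Qed.

Lemma L1 (R : realType) m (G : 'I_m -> R) (c : R) :
  \sum_(i < m) (c - G i) = m%:R * c - \sum_(i < m) G i.
Proof. by rewrite sumrB sumr_const card_ord mulr_natl. Qed.

Lemma L2 (R : realType) m (G : 'I_m -> 'I_m -> R) (c : R) :
  \sum_(i < m) \sum_(l < m | (l < i)%N) (c - G i l) =
  'C(m, 2)%:R * c - \sum_(i < m) \sum_(l < m | (l < i)%N) G i l.
Proof.
under eq_bigr => i _ do rewrite sumrB.
rewrite sumrB; congr (_ - _).
rewrite -cnt2 mulr_suml; apply: eq_bigr => i _; rewrite mulr_suml.
by apply: eq_bigr => l _; rewrite mul1r.
Qed.

Lemma cg (R : realType) (x : R) : cos x = 1 - gg x.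
Proof. by rewrite /gg opprB addrC subrK. Qed.

Definition FA (R : realType) m (th : 'M[R]_m) :=
  \sum_(i < m) \sum_(l < m | (l < i)%N) \sum_(j < m) \sum_(k < m | (k < j)%N)
        gg (th i j - th i k - th l j + th l k).
Definition FB (R : realType) m (th : 'M[R]_m) :=
  \sum_(i < m) \sum_(l < m | (l < i)%N) \sum_(j < m) gg (th i j - th l j).
Definition FC (R : realType) m (th : 'M[R]_m) :=
  \sum_(j < m) \sum_(k < m | (k < j)%N) \sum_(i < m) gg (th i j - th i k).
Definition FD (R : realType) m (th : 'M[R]_m) :=
  \sum_(i < m) \sum_(j < m) gg (th i j).

Lemma A_eq (R : realType) m (th : 'M[R]_m) :
  \sum_(i < m) \sum_(l < m | (l < i)%N) \sum_(j < m) \sum_(k < m | (k < j)%N)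
        cos (th i j - th i k - th l j + th l k)
  = 'C(m, 2)%:R * ('C(m, 2)%:R * 1) - FA th.
Proof.
under eq_bigr => i _ do under eq_bigr => l _ do
  (under eq_bigr => j _ do under eq_bigr => k _ do rewrite cg; rewrite L2).
by rewrite L2.
Qed.

Lemma B_eq (R : realType) m (th : 'M[R]_m) :
  \sum_(i < m) \sum_(l < m | (l < i)%N) \sum_(j < m) cos (th i j - th l j)
  = 'C(m, 2)%:R * (m%:R * 1) - FB th.
Proof.
under eq_bigr => i _ do under eq_bigr => l _ do
  (under eq_bigr => j _ do rewrite cg; rewrite L1).
by rewrite L2.
Qed.

Lemma C_eq (R : realType) m (th : 'M[R]_m) :
  \sum_(j < m) \sum_(k < m | (k < j)%N) \sum_(i < m) cos (th i j - th i k)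
  = 'C(m, 2)%:R * (m%:R * 1) - FC th.
Proof.
under eq_bigr => i _ do under eq_bigr => l _ do
  (under eq_bigr => j _ do rewrite cg; rewrite L1).
by rewrite L2.
Qed.

Lemma D_eq (R : realType) m (th : 'M[R]_m) :
  \sum_(i < m) \sum_(j < m) cos (th i j) = m%:R * (m%:R * 1) - FD th.
Proof.
under eq_bigr => i _ do (under eq_bigr => j _ do rewrite cg; rewrite L1).
by rewrite L1.
Qed.

Lemma gg0 (R : realType) : gg (0 : R) = 0.
Proof. by rewrite /gg cos0 subrr. Qed.

Lemma SA_eq (R : realType) m (th : 'M[R]_m) :
  \sum_(i < m) \sum_(l < m) \sum_(j < m) \sum_(k < m)
     gg (th i j - th i k - th l j + th l k) = 4 * FA th.
Proof.
rewrite sym2; last first.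
- move=> i l; apply: eq_bigr => j _; apply: eq_bigr => k _.
  by rewrite -ggN; congr gg; ring.
- move=> i; apply: big1 => j _; apply: big1 => k _.
  by rewrite (_ : _ - _ - _ + _ = 0) ?gg0 //; ring.
rewrite /FA (_ : 4 = 2 * 2); last by rewrite -natrM.
rewrite -mulrA; congr (_ * _); rewrite mulr_sumr.
apply: eq_bigr => i _; rewrite mulr_sumr; apply: eq_bigr => l _.
rewrite sym2 //.
- move=> j; rewrite (_ : _ - _ - _ + _ = 0) ?gg0 //; ring.
- by move=> j k; rewrite -ggN; congr gg; ring.
Qed.

Lemma SB_eq (R : realType) m (th : 'M[R]_m) :
  \sum_(i < m) \sum_(l < m) \sum_(j < m) gg (th i j - th l j) = 2 * FB th.
Proof.
rewrite sym2 //.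
- by move=> i; apply: big1 => j _; rewrite subrr gg0.
- by move=> i l; apply: eq_bigr => j _; rewrite -ggN opprB.
Qed.

Lemma SC_eq (R : realType) m (th : 'M[R]_m) :
  \sum_(j < m) \sum_(k < m) \sum_(i < m) gg (th i j - th i k) = 2 * FC th.
Proof.
rewrite sym2 //.
- by move=> i; apply: big1 => j _; rewrite subrr gg0.
- by move=> i l; apply: eq_bigr => j _; rewrite -ggN opprB.
Qed.

Lemma F_ge0 (R : realType) m (th : 'M[R]_m) :
  0 <= FA th /\ 0 <= FB th /\ 0 <= FC th /\ 0 <= FD th.
Proof.
rewrite /FA /FB /FC /FD.
by split; [|split; [|split]]; do ! (apply: sumr_ge0 => ? _); apply: gg_ge0.
Qed.

Lemma ss_scal (R : realType) m (a : 'I_m -> 'I_m -> R) (k : R) :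
  \sum_(r < m) \sum_(c < m) (k * a r c) = k * \sum_(r < m) \sum_(c < m) a r c.
Proof. by rewrite mulr_sumr; apply: eq_bigr => r _; rewrite mulr_sumr. Qed.

Lemma ss_add (R : realType) m (a b : 'I_m -> 'I_m -> R) :
  \sum_(r < m) \sum_(c < m) (a r c + b r c) =
  \sum_(r < m) \sum_(c < m) a r c + \sum_(r < m) \sum_(c < m) b r c.
Proof. by rewrite -big_split; apply: eq_bigr => r _; rewrite big_split. Qed.

Lemma key (R : realType) m (th : 'M[R]_m) (i0 j0 : 'I_m) :
  m%:R * (m%:R * gg (th i0 j0)) <= 16 * (FA th + FB th + FC th + FD th).
Proof.
have E : forall r c, th i0 j0 = (th i0 j0 - th i0 c - th r j0 + th r c)
     + (th i0 c - th r c) + (th r j0 - th r c) + th r c.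
  by move=> r c; ring.
have H1 : \sum_(r < m) \sum_(c < m) gg (th i0 j0) <=
   \sum_(r < m) \sum_(c < m) (4 * gg (th i0 j0 - th i0 c - th r j0 + th r c)
     + 4 * gg (th i0 c - th r c) + 4 * gg (th r j0 - th r c) + 4 * gg (th r c)).
  apply: ler_sum => r _; apply: ler_sum => c _.
  by rewrite {1}(E r c) -!mulrDr gg4.
have L : \sum_(r < m) \sum_(c < m) gg (th i0 j0) = m%:R * (m%:R * gg (th i0 j0)).
  by rewrite !sumr_const !card_ord !mulr_natl.
rewrite L !ss_add !ss_scal in H1.
have X1 : \sum_(r < m) \sum_(c < m) gg (th i0 j0 - th i0 c - th r j0 + th r c) <= 4 * FA th.
  rewrite -SA_eq.
  have S := @single_le R _ (fun i => \sum_(l < m) \sum_(j < m) \sum_(k < m)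
     gg (th i j - th i k - th l j + th l k)) i0.
  apply: le_trans (S _); last first.
    by move=> i; do ! (apply: sumr_ge0 => ? _); apply: gg_ge0.
  apply: ler_sum => r _.
  apply: (@single_le R _ (fun j => \sum_(k < m) gg (th i0 j - th i0 k - th r j + th r k)) j0).
  by move=> j; do ! (apply: sumr_ge0 => ? _); apply: gg_ge0.
have X2 : \sum_(r < m) \sum_(c < m) gg (th i0 c - th r c) <= 2 * FB th.
  rewrite -SB_eq.
  apply: (@single_le R _ (fun i => \sum_(l < m) \sum_(j < m) gg (th i j - th l j)) i0).
  by move=> j; do ! (apply: sumr_ge0 => ? _); apply: gg_ge0.
have X3 : \sum_(r < m) \sum_(c < m) gg (th r j0 - th r c) <= 2 * FC th.
  rewrite -SC_eq exchange_big /=.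
  apply: (@single_le R _ (fun j => \sum_(k < m) \sum_(i < m) gg (th i j - th i k)) j0).
  by move=> j; do ! (apply: sumr_ge0 => ? _); apply: gg_ge0.
have X4 : \sum_(r < m) \sum_(c < m) gg (th r c) = FD th by [].
have [? [? [? ?]]] := F_ge0 th.
lra.
Qed.

Lemma final_arith (R : realType) (T M N Q C FA FB FC FD G t2 : R) :
  C = T + M -> C = N * M / 2 -> 0 < M -> 0 < N -> 0 < Q ->
  0 <= FA -> 0 <= FB -> 0 <= FC -> 0 <= FD ->
  M * (M * G) <= 16 * (FA + FB + FC + FD) -> t2 <= 16 * G -> 1 < Q * t2 ->
  (C ^+ 2)^-1 * (T * (T * 1) - FA + (T * (M * 1) - FB) + (T * (M * 1) - FC)
     + (M * (M * 1) - FD)) <= 1 - 1 / (400 * N ^+ 2 * Q).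
Proof.
move=> h1 h2 M0 N0 Q0 a b c d k g e.
set F := FA + FB + FC + FD.
have C0 : 0 < C by rewrite h2; apply: divr_gt0 => //; apply: mulr_gt0.
have -> : T * (T * 1) - FA + (T * (M * 1) - FB) + (T * (M * 1) - FC)
     + (M * (M * 1) - FD) = C ^+ 2 - F by rewrite h1 /F; ring.
have -> : (C ^+ 2)^-1 * (C ^+ 2 - F) = 1 - F / C ^+ 2.
  by field; rewrite gt_eqF.
rewrite lerD2l lerN2.
have X0 : 0 < 400 * N ^+ 2 * Q by rewrite !mulr_gt0 // exprn_gt0.
have C20 : 0 < C ^+ 2 by rewrite exprn_gt0.
rewrite ler_pdivrMr // mulrC mulrA ler_pdivlMr // mul1r.
have k1 : M ^+ 2 * t2 <= 256 * F.
  have : M ^+ 2 * t2 <= M ^+ 2 * (16 * G) by rewrite ler_wpM2l // sqr_ge0.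
  rewrite /F; move: k; rewrite expr2; nra.
have k2 : M ^+ 2 <= 256 * Q * F.
  have : M ^+ 2 * 1 <= M ^+ 2 * (Q * t2) by rewrite ler_wpM2l ?sqr_ge0 // ltW.
  have : Q * (M ^+ 2 * t2) <= Q * (256 * F) by rewrite ler_wpM2l // ltW.
  nra.
have -> : C ^+ 2 = N ^+ 2 * M ^+ 2 / 4 by rewrite h2; field.
have : N ^+ 2 * M ^+ 2 <= N ^+ 2 * (256 * Q * F) by rewrite ler_wpM2l // sqr_ge0.
have : 0 <= Q * F by apply: mulr_ge0; [exact: ltW | rewrite /F; lra].
have : 0 <= N ^+ 2 by rewrite sqr_ge0.
nra.
Qed.

Theorem mainTheorem12 (R : realType) :
  exists n0 q0 : nat, forall n q : nat, (2 <= n)%N -> (n0 <= n)%N -> (q0 <= q)%N ->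
  forall theta : 'M[R]_(n.-1),
    (forall i j, - pi <= theta i j <= pi) ->
    (exists i j, 1 / Num.sqrt (q%:R) < `|theta i j|) ->
    Phi theta <= 1 - 1 / (400 * (n%:R) ^+ 2 * q%:R).
Proof.
exists 2%N, 1%N => n q n2 _ q1 th hr [i0 [j0 ht]].
have n0 : (0 < n)%N by apply: leq_trans n2.
have m0 : (0 < n.-1)%N by rewrite -ltnS prednK.
have hC1 : 'C(n, 2) = ('C(n.-1, 2) + n.-1)%N by rewrite -{1}(prednK n0) binS bin1.
have hC2 : ('C(n, 2) * 2)%N = (n * n.-1)%N.
  by have h := bin_ffact n 2; rewrite ffactnS ffactn1 in h; exact: h.
rewrite /Phi A_eq B_eq C_eq D_eq.
have Q0 : (0 : R) < q%:R by rewrite ltr0n.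
have pi0 := @pi_gt0 R.
have pi4 : pi <= 4 :> R.
  have [/andP [_ h] _] := @pihalf_02_cos_pihalf R.
  lra.
have tb : `|th i0 j0| <= pi by rewrite ler_norml hr.
have g1 := gg_low tb.
have g2 : th i0 j0 ^+ 2 <= 16 * gg (th i0 j0).
  apply: (le_trans g1); apply: ler_wpM2r; first exact: gg_ge0.
  have -> : (16 : R) = 4 ^+ 2 by rewrite expr2 -natrM.
  rewrite !expr2; nra.
have g3 : 1 < q%:R * th i0 j0 ^+ 2.
  have sq0 : 0 < Num.sqrt (q%:R : R) by rewrite sqrtr_gt0.
  rewrite ltr_pdivrMr // in ht.
  have : 1 < (`|th i0 j0| * Num.sqrt q%:R) ^+ 2.
    have h0 : 0 <= `|th i0 j0| * Num.sqrt q%:R by apply: mulr_ge0; [exact: normr_ge0|exact: ltW].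
    rewrite expr2; nra.
  by rewrite exprMn sqr_sqrtr ?ltW // (real_normK (num_real _)) mulrC.
have [a [b [c d]]] := F_ge0 th.
apply: (final_arith (C := 'C(n, 2)%:R) (G := gg (th i0 j0)) (t2 := th i0 j0 ^+ 2)) => //.
- by rewrite hC1 natrD.
- have := congr1 (fun x => x%:R : R) hC2; rewrite /= !natrM => h.
  by rewrite -h mulfK.
- by rewrite ltr0n.
- by rewrite ltr0n.
- exact: key.

Qed.
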